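(* Let $X,Y$ be countable discrete metric spaces and $d\in D(X,Y)$. Then $\mathbb K(H_X,H_Y)\subset M_d(X,Y)$. Moreover, if $\mathbb K(H_X,H_Y)=M_d(X,Y)$, then there exists $L>0$ such that for every injective map $f:X\to Y$ the set $\{x\in X: d(x,f(x))\le L\}$ is finite.
   Context: $H_X=l^2(X)$ with basis $\{\delta_x\}$; $\mathbb K(H_X,H_Y)$ is the space of compact operators $H_X\to H_Y$. $D(X,Y)$ is the set of metrics on $X\sqcup Y$ restricting to $d_X$ and $d_Y$. For $T:H_X\to H_Y$ bounded, $T_{yx}=\langle T\delta_x,\delta_y\rangle$; $T$ has propagation less than $L$ w.r.t. $d$ if $T_{yx}=0$ whenever $d(x,y)\ge L$. $M_d(X,Y)$ is the norm closure in $\mathbb B(H_X,H_Y)$ of the bounded operators of finite propagation w.r.t. $d$. *)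

(* Defs.v *)
From Stdlib Require Import Reals List ClassicalEpsilon.
Open Scope R_scope.

Definition C : Type := (R * R)%type.
Definition C0 : C := (0, 0).
Definition C1 : C := (1, 0).
Definition Cplus (z w : C) : C := (fst z + fst w, snd z + snd w).
Definition Cminus (z w : C) : C := (fst z - fst w, snd z - snd w).
Definition Cmult (z w : C) : C :=
  (fst z * fst w - snd z * snd w, fst z * snd w + snd z * fst w).
Definition Cnorm2 (z : C) : R := fst z * fst z + snd z * snd z.

Definition is_metric {T : Type} (d : T -> T -> R) : Prop :=
  (forall x y, 0 <= d x y) /\
  (forall x y, d x y = 0 <-> x = y) /\
  (forall x y, d x y = d y x) /\
  (forall x y z, d x z <= d x y + d y z).

Definition countable (T : Type) : Prop :=
  exists f : T -> nat, forall a b, f a = f b -> a = b.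

Definition discrete_metric {T : Type} (d : T -> T -> R) : Prop :=
  forall x, exists r, 0 < r /\ forall y, d x y < r -> y = x.

Definition in_D {X Y : Type} (dX : X -> X -> R) (dY : Y -> Y -> R)
  (d : (X + Y) -> (X + Y) -> R) : Prop :=
  is_metric d /\
  (forall a b, d (inl a) (inl b) = dX a b) /\
  (forall a b, d (inr a) (inr b) = dY a b).

Definition fsum_sq {X : Type} (u : X -> C) (l : list X) : R :=
  fold_right (fun x acc => Cnorm2 (u x) + acc) 0 l.

Definition normsq_le {X : Type} (u : X -> C) (M : R) : Prop :=
  forall l : list X, NoDup l -> fsum_sq u l <= M.

Definition in_l2 {X : Type} (u : X -> C) : Prop := exists M, normsq_le u M.

Definition delta {X : Type} (x : X) : X -> C :=
  fun x' => if excluded_middle_informative (x' = x) then C1 else C0.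

(* ---------- operators H_X -> H_Y ----------
   An operator is a map T : (X -> C) -> (Y -> C); only its values on
   l^2 vectors matter. *)
Definition Op (X Y : Type) : Type := (X -> C) -> (Y -> C).

Definition linear_op {X Y : Type} (T : Op X Y) : Prop :=
  forall (a : C) (u v : X -> C), in_l2 u -> in_l2 v ->
    forall y, T (fun x => Cplus (Cmult a (u x)) (v x)) y
              = Cplus (Cmult a (T u y)) (T v y).

Definition opnorm_le {X Y : Type} (T : Op X Y) (K : R) : Prop :=
  forall (v : X -> C) (M : R), normsq_le v M -> normsq_le (T v) (K * K * M).

Definition bounded_op {X Y : Type} (T : Op X Y) : Prop :=
  linear_op T /\ exists K, 0 <= K /\ opnorm_le T K.

Definition op_minus {X Y : Type} (T S : Op X Y) : Op X Y :=
  fun v y => Cminus (T v y) (S v y).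

Definition coef {X Y : Type} (T : Op X Y) (y : Y) (x : X) : C := T (delta x) y.

Definition compact_op {X Y : Type} (T : Op X Y) : Prop :=
  bounded_op T /\
  forall (v : nat -> X -> C) (B : R), (forall n, normsq_le (v n) B) ->
    exists phi : nat -> nat, (forall n, (phi n < phi (S n))%nat) /\
    exists w : Y -> C, in_l2 w /\
      forall eps, 0 < eps -> exists N, forall n, (N <= n)%nat ->
        normsq_le (fun y => Cminus (T (v (phi n)) y) (w y)) eps.

Definition propagation_lt {X Y : Type} (d : (X + Y) -> (X + Y) -> R)
  (T : Op X Y) (L : R) : Prop :=
  forall x y, L <= d (inl x) (inr y) -> coef T y x = C0.

Definition in_Md {X Y : Type} (d : (X + Y) -> (X + Y) -> R) (T : Op X Y) : Prop :=
  bounded_op T /\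
  forall eps, 0 < eps -> exists S : Op X Y,
    bounded_op S /\ (exists L, propagation_lt d S L) /\
    opnorm_le (op_minus T S) eps.

Definition injective {A B : Type} (f : A -> B) : Prop :=
  forall a b, f a = f b -> a = b.

(* Main.v *)
Require Import Defs.
From Stdlib Require Import Reals List Lra Psatz Classical ClassicalEpsilon FunctionalExtensionality.
Open Scope R_scope.
Local Notation C := Defs.C.
Local Notation C0 := Defs.C0.
Local Notation C1 := Defs.C1.

Lemma Cnorm2_nonneg z : 0 <= Cnorm2 z.
Proof. destruct z as [a b]; unfold Cnorm2; simpl; nra. Qed.

Lemma fsum_cons {X} (u : X -> C) x l : fsum_sq u (x::l) = Cnorm2 (u x) + fsum_sq u l.
Proof. reflexivity. Qed.

Lemma fsum_nonneg {X} (u : X -> C) l : 0 <= fsum_sq u l.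
Proof. induction l; simpl; [lra|]. pose proof (Cnorm2_nonneg (u a)); lra. Qed.

Lemma fsum_app {X} (u : X -> C) l1 l2 : fsum_sq u (l1++l2) = fsum_sq u l1 + fsum_sq u l2.
Proof. induction l1; simpl; [lra|]. rewrite IHl1; lra. Qed.

Lemma fsum_mono {X} (u v : X -> C) l :
  (forall x, In x l -> Cnorm2 (u x) <= Cnorm2 (v x)) -> fsum_sq u l <= fsum_sq v l.
Proof.
  induction l; intros H; simpl; [lra|].
  assert (H1 := H a (or_introl eq_refl)).
  assert (fsum_sq u l <= fsum_sq v l) by (apply IHl; intros; apply H; right; auto). lra.
Qed.

Lemma fsum_ext {X} (u v : X -> C) l :
  (forall x, In x l -> Cnorm2 (u x) = Cnorm2 (v x)) -> fsum_sq u l = fsum_sq v l.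
Proof.
  intros H; apply Rle_antisym; apply fsum_mono; intros x Hx; rewrite H; auto; lra.
Qed.

Lemma fsum_lin3 {X} (u v w : X -> C) l :
  (forall x, In x l -> Cnorm2 (u x) <= 2*Cnorm2 (v x) + 2*Cnorm2 (w x)) ->
  fsum_sq u l <= 2*fsum_sq v l + 2*fsum_sq w l.
Proof.
  induction l; intros H; simpl; [lra|].
  assert (H1 := H a (or_introl eq_refl)).
  assert (fsum_sq u l <= 2*fsum_sq v l + 2*fsum_sq w l) by (apply IHl; intros; apply H; right; auto). lra.
Qed.

Lemma fsum_bound {X} (u : X -> C) l c :
  (forall x, In x l -> Cnorm2 (u x) <= c) -> fsum_sq u l <= INR (length l) * c.
Proof.
  induction l; intros H; [simpl; lra|]. rewrite fsum_cons.
  assert (H1 := H a (or_introl eq_refl)).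
  assert (fsum_sq u l <= INR (length l) * c) by (apply IHl; intros; apply H; right; auto).
  cbn [length]; rewrite S_INR. lra.
Qed.

Lemma fsum_incl {X} (u : X -> C) l1 : NoDup l1 -> forall l2, incl l1 l2 -> fsum_sq u l1 <= fsum_sq u l2.
Proof.
  induction 1 as [|a l1 Ha Hnd IH]; intros l2 Hi.
  - simpl; apply fsum_nonneg.
  - assert (Ha2 : In a l2) by (apply Hi; left; auto).
    destruct (in_split _ _ Ha2) as [p [q Hpq]]. subst l2.
    rewrite fsum_app, fsum_cons.
    assert (fsum_sq u l1 <= fsum_sq u (p ++ q)).
    { apply IH. intros x Hx. assert (Hx2 : In x (p ++ a :: q)) by (apply Hi; right; auto).
      apply in_app_or in Hx2. apply in_or_app. destruct Hx2 as [H|H]; auto.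
      destruct H as [H|H]; auto. subst; contradiction. }
    rewrite fsum_app in H. simpl. lra.
Qed.

Lemma normsq_le_M {X} (u : X -> C) M : normsq_le u M -> 0 <= M.
Proof. intros H. apply (H nil (NoDup_nil _)). Qed.

Lemma normsq_mono {X} (u v : X -> C) M :
  (forall x, Cnorm2 (u x) <= Cnorm2 (v x)) -> normsq_le v M -> normsq_le u M.
Proof. intros H Hv l Hl. eapply Rle_trans; [apply fsum_mono; intros; apply H|]. apply Hv; auto. Qed.

Definition inb {A} (l : list A) (x : A) : bool :=
  if excluded_middle_informative (In x l) then true else false.

Lemma inb_true {A} (l : list A) x : inb l x = true <-> In x l.
Proof. unfold inb; destruct excluded_middle_informative; split; intros; try tauto; discriminate. Qed.

Lemma fsum_filter_zero {X} (u : X -> C) p l :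
  (forall x, In x l -> p x = false -> Cnorm2 (u x) = 0) -> fsum_sq u l = fsum_sq u (filter p l).
Proof.
  induction l; intros H; simpl; auto.
  rewrite IHl by (intros; apply H; auto; right; auto).
  destruct (p a) eqn:E; simpl; auto. rewrite H; auto; [lra| left; auto].
Qed.

Lemma fsum_support {X} (u : X -> C) E l : NoDup l ->
  (forall x, ~ In x E -> Cnorm2 (u x) = 0) -> fsum_sq u l <= fsum_sq u E.
Proof.
  intros Hl H. rewrite (fsum_filter_zero u (inb E) l).
  - apply fsum_incl. apply NoDup_filter; auto.
    intros x Hx. apply filter_In in Hx. apply inb_true; tauto.
  - intros x _ Hx. apply H. intro Hin. apply inb_true in Hin. congruence.
Qed.

Lemma l2_tail {X} (u : X -> C) : in_l2 u -> forall eta, 0 < eta ->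
  exists E, NoDup E /\ forall l, NoDup l -> (forall x, In x l -> ~ In x E) -> fsum_sq u l <= eta.
Proof.
  intros [M HM] eta Heta.
  set (P := fun r => exists l, NoDup l /\ r = fsum_sq u l).
  assert (Hb : bound P) by (exists M; intros r [l [Hl ->]]; apply HM; auto).
  assert (Hne : exists r, P r) by (exists 0; exists nil; split; [constructor|reflexivity]).
  destruct (completeness P Hb Hne) as [s [Hub Hlub]].
  assert (exists l0, NoDup l0 /\ s - eta < fsum_sq u l0) as [l0 [Hl0 Hs]].
  { apply NNPP; intro Hn. assert (s <= s - eta); [|lra].
    apply Hlub. intros r [l [Hl ->]]. apply Rnot_lt_le. intro Hlt. apply Hn. exists l; auto. }
  exists l0; split; auto. intros l Hl Hdis.
  assert (Hnd : NoDup (l0 ++ l)).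
  { apply NoDup_app; auto. intros a Ha Ha'. apply (Hdis a Ha' Ha). }
  assert (fsum_sq u (l0 ++ l) <= s) by (apply Hub; exists (l0 ++ l); auto).
  rewrite fsum_app in H. lra.
Qed.


Ltac cdes := repeat match goal with z : C |- _ => destruct z end.
Ltac ceq := unfold Cplus, Cmult, Cminus, C0, C1, Cnorm2 in *; simpl in *; f_equal; ring.

Definition zerov {X} : X -> C := fun _ => C0.

Lemma in_l2_zero {X} : in_l2 (@zerov X).
Proof. exists 0. intros l _. induction l; simpl; auto; [lra|]. unfold zerov, C0, Cnorm2 in *; simpl in *. lra. Qed.

Lemma Cnorm2_eq0 z : Cnorm2 z = 0 -> z = C0.
Proof. destruct z as [a b]; unfold Cnorm2, C0; simpl; intros; f_equal; nra. Qed.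

Lemma pair_eq (a b c d : R) : a = c -> b = d -> (a, b) = (c, d).
Proof. intros; subst; auto. Qed.

Lemma T0 {X Y} (T : Op X Y) : linear_op T -> forall y, T zerov y = C0.
Proof.
  intros HT y. pose proof (HT C1 zerov zerov in_l2_zero in_l2_zero y) as H.
  replace (fun x => Cplus (Cmult C1 (zerov x)) (zerov x)) with (@zerov X) in H.
  2:{ apply functional_extensionality; intros x; unfold zerov; ceq. }
  destruct (T zerov y) as [a b]. unfold Cplus, Cmult, C1, C0 in *; simpl in *.
  injection H; intros; apply pair_eq; lra.
Qed.

Lemma T0' {X Y} (T : Op X Y) u : linear_op T -> (forall x, u x = C0) -> forall y, T u y = C0.
Proof. intros HT Hu. replace u with (@zerov X). apply T0; auto. apply functional_extensionality; intros; rewrite Hu; auto. Qed.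

Lemma T_add {X Y} (T : Op X Y) u v : linear_op T -> in_l2 u -> in_l2 v ->
  forall y, T (fun x => Cplus (u x) (v x)) y = Cplus (T u y) (T v y).
Proof.
  intros HT Hu Hv y. pose proof (HT C1 u v Hu Hv y) as H.
  replace (fun x => Cplus (Cmult C1 (u x)) (v x)) with (fun x => Cplus (u x) (v x)) in H.
  2:{ apply functional_extensionality; intros x; destruct (u x), (v x); ceq. }
  rewrite H. destruct (T u y), (T v y); ceq.
Qed.

Lemma T_scal {X Y} (T : Op X Y) a u : linear_op T -> in_l2 u ->
  forall y, T (fun x => Cmult a (u x)) y = Cmult a (T u y).
Proof.
  intros HT Hu y. pose proof (HT a u zerov Hu in_l2_zero y) as H.
  replace (fun x => Cplus (Cmult a (u x)) (zerov x)) with (fun x => Cmult a (u x)) in H.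
  2:{ apply functional_extensionality; intros x; unfold zerov; destruct a, (u x); ceq. }
  rewrite H, T0 by auto. destruct a, (T u y); ceq.
Qed.

Lemma Cnorm2_mult a z : Cnorm2 (Cmult a z) = Cnorm2 a * Cnorm2 z.
Proof. destruct a, z; unfold Cnorm2, Cmult; simpl; ring. Qed.

Lemma Cnorm2_tri z w : Cnorm2 z <= 2 * Cnorm2 (Cminus z w) + 2 * Cnorm2 w.
Proof. destruct z as [a b], w as [c d]; unfold Cnorm2, Cminus; simpl.
  pose proof (pow2_ge_0 (a - 2*c)); pose proof (pow2_ge_0 (b - 2*d)); nra. Qed.

Lemma Cnorm2_tri2 z w v : Cnorm2 (Cminus z w) <= 2 * Cnorm2 (Cminus z v) + 2 * Cnorm2 (Cminus w v).
Proof. destruct z as [a b], w as [c d], v as [e f]; unfold Cnorm2, Cminus; simpl.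
  pose proof (pow2_ge_0 (a + c - 2*e)); pose proof (pow2_ge_0 (b + d - 2*f)); nra. Qed.

Lemma Cnorm2_plus z w : Cnorm2 (Cplus z w) <= 2 * Cnorm2 z + 2 * Cnorm2 w.
Proof. destruct z as [a b], w as [c d]; unfold Cnorm2, Cplus; simpl.
  pose proof (pow2_ge_0 (a - c)); pose proof (pow2_ge_0 (b - d)); nra. Qed.

Lemma bounded_l2 {X Y} (T : Op X Y) K : opnorm_le T K -> forall v M, normsq_le v M -> in_l2 (T v).
Proof. intros H v M Hv. exists (K*K*M). apply H; auto. Qed.

Lemma bounded_pt {X Y} (T : Op X Y) K : opnorm_le T K -> forall v M, normsq_le v M ->
  forall y, Cnorm2 (T v y) <= K*K*M.
Proof.
  intros H v M Hv y. pose proof (H v M Hv (y::nil)) as H1.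
  assert (NoDup (y::nil)) by (constructor; [simpl; auto|constructor]).
  specialize (H1 H0). simpl in H1. lra.
Qed.

Definition Pon {A} (F : list A) (v : A -> C) : A -> C :=
  fun x => if excluded_middle_informative (In x F) then v x else C0.
Definition Poff {A} (F : list A) (v : A -> C) : A -> C :=
  fun x => if excluded_middle_informative (In x F) then C0 else v x.

Lemma Pon_le {A} F (v : A -> C) x : Cnorm2 (Pon F v x) <= Cnorm2 (v x).
Proof. unfold Pon; destruct excluded_middle_informative; [lra|]. unfold C0, Cnorm2; simpl. pose proof (Cnorm2_nonneg (v x)); unfold Cnorm2 in *; lra. Qed.
Lemma Poff_le {A} F (v : A -> C) x : Cnorm2 (Poff F v x) <= Cnorm2 (v x).
Proof. unfold Poff; destruct excluded_middle_informative; [|lra]. unfold C0, Cnorm2; simpl. pose proof (Cnorm2_nonneg (v x)); unfold Cnorm2 in *; lra. Qed.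

Lemma Pon_l2 {A} F (v : A -> C) : in_l2 v -> in_l2 (Pon F v).
Proof. intros [M H]; exists M; eapply normsq_mono; [apply Pon_le|]; eauto. Qed.
Lemma Poff_l2 {A} F (v : A -> C) : in_l2 v -> in_l2 (Poff F v).
Proof. intros [M H]; exists M; eapply normsq_mono; [apply Poff_le|]; eauto. Qed.

Lemma split_PQ {X Y} (T : Op X Y) F v : linear_op T -> in_l2 v ->
  forall y, T v y = Cplus (T (Pon F v) y) (T (Poff F v) y).
Proof.
  intros HT Hv y. rewrite <- T_add by (auto using Pon_l2, Poff_l2).
  f_equal. apply functional_extensionality; intros x. unfold Pon, Poff.
  destruct excluded_middle_informative; destruct (v x); ceq.
Qed.

Lemma fsum_Poff {A} (F : list A) v l :
  fsum_sq (Poff F v) l = fsum_sq v (filter (fun x => negb (inb F x)) l).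
Proof.
  induction l; simpl; auto. rewrite IHl. unfold Poff, inb.
  destruct excluded_middle_informative; simpl; auto. unfold Cnorm2, C0; simpl; ring.
Qed.

Lemma filter_notin {A} (F : list A) l x : In x (filter (fun x => negb (inb F x)) l) -> In x l /\ ~ In x F.
Proof.
  intros H. apply filter_In in H. destruct H as [H1 H2]. split; auto. intro H.
  apply inb_true in H. rewrite H in H2. discriminate.
Qed.


Lemma tailA {X Y} (T : Op X Y) : compact_op T -> forall e, 0 < e ->
  exists G : list Y, forall v, normsq_le v 1 -> normsq_le (Poff G (T v)) e.
Proof.
  intros [[Hlin [K [HK Hop]]] Hc] e He.
  apply NNPP; intro Hn.
  assert (H : forall G : list Y, exists v, normsq_le v 1 /\ ~ normsq_le (Poff G (T v)) e).
  { intros G. apply NNPP; intro H1. apply Hn. exists G. intros v Hv.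
    apply NNPP; intro H2. apply H1. exists v; auto. }
  assert (Htail : forall w : Y -> C, exists E : list Y, in_l2 w -> forall l, NoDup l ->
            (forall x, In x l -> ~ In x E) -> fsum_sq w l <= e/8).
  { intros w. destruct (classic (in_l2 w)) as [Hw|Hw].
    - destruct (l2_tail w Hw (e/8)) as [E [_ HE]]; [lra|]. exists E; auto.
    - exists nil; tauto. }
  set (vf := fun G => proj1_sig (constructive_indefinite_description _ (H G))).
  assert (Hvf : forall G, normsq_le (vf G) 1 /\ ~ normsq_le (Poff G (T (vf G))) e).
  { intros G. exact (proj2_sig (constructive_indefinite_description _ (H G))). }
  set (Ef := fun w => proj1_sig (constructive_indefinite_description _ (Htail w))).
  assert (HEf : forall w, in_l2 w -> forall l, NoDup l ->
            (forall x, In x l -> ~ In x (Ef w)) -> fsum_sq w l <= e/8).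
  { intros w. exact (proj2_sig (constructive_indefinite_description _ (Htail w))). }
  set (Gseq := fun n => nat_rect (fun _ => list Y) nil (fun _ G => G ++ Ef (T (vf G))) n).
  assert (HGS : forall n, Gseq (S n) = Gseq n ++ Ef (T (vf (Gseq n)))) by reflexivity.
  assert (Hmono : forall n m, (n <= m)%nat -> incl (Gseq n) (Gseq m)).
  { intros n m Hnm. induction Hnm; [apply incl_refl|].
    rewrite HGS. intros x Hx. apply in_or_app; left; auto. }
  destruct (Hc (fun n => vf (Gseq n)) 1 (fun n => proj1 (Hvf _))) as [phi [Hphi [w [Hw Hconv]]]].
  destruct (Hconv (e/32)) as [N HN]; [lra|].
  set (a := T (vf (Gseq (phi (S N))))).
  set (b := T (vf (Gseq (phi N)))).
  destruct (Hvf (Gseq (phi (S N)))) as [_ Hna].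
  apply Hna. intros l Hl. rewrite fsum_Poff.
  set (l' := filter _ l).
  assert (Hl' : NoDup l') by (apply NoDup_filter; auto).
  assert (Hb : fsum_sq b l' <= e/8).
  { apply HEf. eapply bounded_l2; eauto. apply Hvf. auto.
    intros x Hx Hx2. apply filter_notin in Hx. destruct Hx as [_ Hx].
    apply Hx. apply (Hmono (S (phi N))). apply Hphi.
    rewrite HGS. apply in_or_app; right; auto. }
  assert (Haw : fsum_sq (fun y => Cminus (a y) (w y)) l' <= e/32) by (apply (HN (S N)); auto).
  assert (Hbw : fsum_sq (fun y => Cminus (b y) (w y)) l' <= e/32) by (apply (HN N); auto).
  assert (Hab : fsum_sq (fun y => Cminus (a y) (b y)) l' <= 2 * (e/32) + 2 * (e/32)).
  { eapply Rle_trans; [apply fsum_lin3 with (v := fun y => Cminus (a y) (w y)) (w := fun y => Cminus (b y) (w y)); intros; apply Cnorm2_tri2|]. lra. }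
  assert (fsum_sq a l' <= 2 * fsum_sq (fun y => Cminus (a y) (b y)) l' + 2 * fsum_sq b l').
  { apply fsum_lin3. intros; apply Cnorm2_tri. }
  fold a. lra.
Qed.


Definition csum {A} (l : list A) (f : A -> C) : C := fold_right (fun x acc => Cplus (f x) acc) C0 l.

Lemma csum_ext {A} (l : list A) f g : (forall x, In x l -> f x = g x) -> csum l f = csum l g.
Proof.
  induction l; intros H; simpl; auto. rewrite H by (left; auto). rewrite IHl; auto.
  intros; apply H; right; auto.
Qed.

Lemma fs_l2 {X} (u : X -> C) E : (forall x, ~ In x E -> u x = C0) -> in_l2 u.
Proof.
  intros H. exists (fsum_sq u E). intros l Hl. apply fsum_support; auto.
  intros x Hx. rewrite H; auto. unfold Cnorm2, C0; simpl; ring.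
Qed.

Lemma FL {X Y} (T : Op X Y) y0 : linear_op T -> forall l, NoDup l -> forall u,
  (forall x, ~ In x l -> u x = C0) ->
  T u y0 = csum l (fun x => Cmult (u x) (T (delta x) y0)).
Proof.
  intros HT l Hl. induction Hl as [|a l Ha Hnd IH]; intros u Hu.
  - simpl. apply T0'; auto.
  - set (u' := fun x => if excluded_middle_informative (x = a) then C0 else u x).
    assert (Hdl : in_l2 (delta a)).
    { apply fs_l2 with (E := a :: nil). intros x Hx. unfold delta.
      destruct excluded_middle_informative; auto. subst; exfalso; apply Hx; left; auto. }
    assert (Hu'z : forall x, ~ In x l -> u' x = C0).
    { intros x Hx. unfold u'. destruct excluded_middle_informative; auto.
      apply Hu. intros [H|H]; auto. }
    assert (Hu' : in_l2 u') by (apply fs_l2 with (E := l); auto).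
    pose proof (HT (u a) (delta a) u' Hdl Hu' y0) as H.
    replace (fun x => Cplus (Cmult (u a) (delta a x)) (u' x)) with u in H.
    2:{ apply functional_extensionality; intros x. unfold u', delta.
        destruct excluded_middle_informative.
        - rewrite e. destruct (u a); ceq.
        - destruct (u x); ceq. }
    rewrite H, (IH u' Hu'z). simpl. f_equal.
    apply csum_ext. intros x Hx. unfold u'. destruct excluded_middle_informative; auto.
    subst; contradiction.
Qed.

Lemma cs_id {A} (l : list A) (u b : A -> C) c q1 q2 :
  fold_right (fun x acc =>
     (c * fst (u x) - q1 * fst (b x) - q2 * snd (b x))^2 +
     (c * snd (u x) - q2 * fst (b x) + q1 * snd (b x))^2 + acc) 0 l
  = c^2 * fsum_sq u l - 2*c*(q1 * fst (csum l (fun x => Cmult (u x) (b x)))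
                            + q2 * snd (csum l (fun x => Cmult (u x) (b x))))
    + (q1^2 + q2^2) * fsum_sq b l.
Proof.
  induction l as [|a l IHl]; [simpl; ring|]. unfold csum in *. cbn [fold_right] in *.
  rewrite IHl. unfold fsum_sq, Cnorm2, Cplus, Cmult. cbn [fold_right fst snd]. ring.
Qed.

Lemma CS {A} (l : list A) (u b : A -> C) :
  Cnorm2 (csum l (fun x => Cmult (u x) (b x))) <= fsum_sq u l * fsum_sq b l.
Proof.
  set (P1 := fst (csum l (fun x => Cmult (u x) (b x)))).
  set (P2 := snd (csum l (fun x => Cmult (u x) (b x)))).
  assert (Hq : forall c q1 q2, 0 <= c^2 * fsum_sq u l - 2*c*(q1 * P1 + q2 * P2) + (q1^2 + q2^2) * fsum_sq b l).
  { intros c q1 q2.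
    assert (Hn : 0 <= fold_right (fun x acc =>
     (c * fst (u x) - q1 * fst (b x) - q2 * snd (b x))^2 +
     (c * snd (u x) - q2 * fst (b x) + q1 * snd (b x))^2 + acc) 0 l).
    { clear. induction l; cbn [fold_right]; [lra|].
      pose proof (pow2_ge_0 (c * fst (u a) - q1 * fst (b a) - q2 * snd (b a))).
      pose proof (pow2_ge_0 (c * snd (u a) - q2 * fst (b a) + q1 * snd (b a))). lra. }
    rewrite cs_id in Hn. exact Hn. }
  change (Cnorm2 (csum l (fun x => Cmult (u x) (b x)))) with (P1*P1 + P2*P2).
  set (Au := fsum_sq u l) in *. set (B := fsum_sq b l) in *.
  assert (HA : 0 <= Au) by apply fsum_nonneg.
  assert (HB : 0 <= B) by apply fsum_nonneg.
  assert (HP : 0 <= P1*P1 + P2*P2) by nra.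
  destruct (Rle_lt_or_eq_dec 0 B HB) as [HBp|HB0].
  - specialize (Hq B P1 P2).
    assert (B * (Au * B - (P1*P1+P2*P2)) >= 0) by nra.
    assert (Au * B - (P1*P1+P2*P2) >= 0).
    { destruct (Rle_or_lt 0 (Au * B - (P1*P1+P2*P2))); [lra|]. nra. }
    lra.
  - rewrite <- HB0 in *.
    destruct (Rle_lt_or_eq_dec 0 (P1*P1+P2*P2) HP) as [Hp|Hp]; [|lra].
    set (k := (Au+1)/(2*(P1*P1+P2*P2))).
    specialize (Hq 1 (k*P1) (k*P2)).
    assert (2*k*(P1*P1+P2*P2) = Au + 1) by (unfold k; field; lra).
    nra.
Qed.


Definition Cconj (z : C) : C := (fst z, - snd z).

Lemma csum_conj {A} (l : list A) (a : A -> C) :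
  csum l (fun x => Cmult (Cconj (a x)) (a x)) = (fsum_sq a l, 0).
Proof.
  induction l as [|x l IH]; [reflexivity|]. unfold csum in *. cbn [fold_right] in *.
  rewrite IH. rewrite fsum_cons. destruct (a x); unfold Cplus, Cmult, Cconj, Cnorm2; simpl; f_equal; ring.
Qed.

Lemma tailB {X Y} (T : Op X Y) : bounded_op T -> forall y0 dl, 0 < dl ->
  exists F : list X, forall u, normsq_le u 1 -> (forall x, In x F -> u x = C0) ->
    Cnorm2 (T u y0) <= dl.
Proof.
  intros [Hlin [K [HK Hop]]] y0 dl Hdl.
  set (a := fun x => T (delta x) y0).
  assert (Ha : in_l2 a).
  { exists (K*K). intros l Hl. set (s := fsum_sq a l).
    set (vl := Pon l (fun x => Cconj (a x))).
    assert (Hz : forall x, ~ In x l -> vl x = C0).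
    { intros x Hx; unfold vl, Pon; destruct excluded_middle_informative; tauto. }
    assert (HT : T vl y0 = (s, 0)).
    { rewrite (FL T y0 Hlin l Hl vl Hz). unfold s. rewrite <- (csum_conj l a). apply csum_ext.
      intros x Hx. unfold vl, Pon. destruct excluded_middle_informative; tauto. }
    assert (Hn : normsq_le vl s).
    { intros l' Hl'. eapply Rle_trans. apply (fsum_support vl l l' Hl').
      intros x Hx; rewrite Hz; auto; unfold Cnorm2, C0; simpl; ring.
      right. apply fsum_ext. intros x Hx. unfold vl, Pon.
      destruct excluded_middle_informative; [|tauto]. unfold Cconj, Cnorm2; simpl; ring. }
    pose proof (bounded_pt T K Hop vl s Hn y0) as H. rewrite HT in H.
    unfold Cnorm2 in H; simpl in H.
    assert (Hs : 0 <= s) by apply fsum_nonneg.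
    destruct (Rle_lt_or_eq_dec 0 s Hs) as [Hsp|Hs0]; [|rewrite <- Hs0; nra].
    apply Rmult_le_reg_r with s; [auto|]. lra. }
  destruct (l2_tail a Ha (dl/4)) as [F [_ HF]]; [lra|].
  exists F. intros u Hu Hz.
  set (eta := dl / (4 * (K*K+1))).
  assert (Heta : 0 < eta) by (unfold eta; apply Rdiv_lt_0_compat; nra).
  assert (HKeta : K*K*eta <= dl/4).
  { assert (eta * (4*(K*K+1)) = dl) by (unfold eta; field; nra). nra. }
  assert (Hul : in_l2 u) by (exists 1; auto).
  destruct (l2_tail u Hul eta Heta) as [E [HE HEt]].
  rewrite (split_PQ T E u Hlin Hul y0).
  assert (H1 : Cnorm2 (T (Poff E u) y0) <= K*K*eta).
  { apply (bounded_pt T K Hop). intros l Hl. rewrite fsum_Poff. apply HEt.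
    apply NoDup_filter; auto. intros x Hx; apply filter_notin in Hx; tauto. }
  assert (H2 : Cnorm2 (T (Pon E u) y0) <= dl/4).
  { rewrite (FL T y0 Hlin E HE).
    2:{ intros x Hx; unfold Pon; destruct excluded_middle_informative; tauto. }
    rewrite (csum_ext E _ (fun x => Cmult (u x) (Poff F a x))).
    2:{ intros x Hx. unfold Pon, Poff. fold (a x).
        destruct (excluded_middle_informative (In x E)); [|tauto].
        destruct (excluded_middle_informative (In x F)); auto.
        rewrite Hz; auto. destruct (a x); unfold Cmult, C0; simpl; f_equal; ring. }
    eapply Rle_trans; [apply CS|].
    assert (fsum_sq u E <= 1) by (apply Hu; auto).
    assert (fsum_sq (Poff F a) E <= dl/4).
    { rewrite fsum_Poff. apply HF. apply NoDup_filter; auto.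
      intros x Hx; apply filter_notin in Hx; tauto. }
    pose proof (fsum_nonneg u E). pose proof (fsum_nonneg (Poff F a) E). nra. }
  eapply Rle_trans; [apply Cnorm2_plus|]. lra.
Qed.


Definition ssum {A} (l : list A) (g : A -> R) : R := fold_right (fun y a => g y + a) 0 l.

Lemma ssum_nonneg {A} (l : list A) g : (forall y, 0 <= g y) -> 0 <= ssum l g.
Proof. intros H; induction l; simpl; [lra|]. specialize (H a); lra. Qed.

Lemma ssum_ge {A} (l : list A) g y : (forall y, 0 <= g y) -> In y l -> g y <= ssum l g.
Proof.
  intros H; induction l; simpl; [tauto|]. intros [->|Hy].
  - pose proof (ssum_nonneg l g H); lra.
  - specialize (IHl Hy). specialize (H a). lra.
Qed.

Lemma fsum_add {X} (u a b : X -> C) l :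
  (forall x, Cnorm2 (u x) = Cnorm2 (a x) + Cnorm2 (b x)) -> fsum_sq u l = fsum_sq a l + fsum_sq b l.
Proof. intros H; induction l; simpl; [lra|]. rewrite IHl, H. lra. Qed.

Lemma fsum_zero {X} (u : X -> C) l : (forall x, Cnorm2 (u x) = 0) -> fsum_sq u l = 0.
Proof. intros H; induction l; simpl; [lra|]. rewrite IHl, H. lra. Qed.

Lemma fsum_scale {X} (u : X -> C) c l :
  fsum_sq (fun x => Cmult (c, 0) (u x)) l = c * c * fsum_sq u l.
Proof.
  induction l; simpl; [ring|]. rewrite IHl. destruct (u a); unfold Cnorm2, Cmult; simpl; ring.
Qed.

Lemma normsq_zero {X} (v : X -> C) : normsq_le v 0 -> forall x, v x = C0.
Proof.
  intros H x. apply Cnorm2_eq0. pose proof (H (x::nil)) as H1.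
  assert (NoDup (x::nil)) by (constructor; [simpl; auto|constructor]).
  specialize (H1 H0). simpl in H1. pose proof (Cnorm2_nonneg (v x)). lra.
Qed.

Lemma opnorm_from_unit {X Y} (T : Op X Y) eps : linear_op T ->
  (forall v, normsq_le v 1 -> normsq_le (T v) (eps*eps)) -> opnorm_le T eps.
Proof.
  intros Hlin Hu v M Hv.
  pose proof (normsq_le_M v M Hv) as HM.
  destruct (Rle_lt_or_eq_dec 0 M HM) as [HMp|HM0].
  - set (c := / sqrt M).
    assert (Hsq : sqrt M * sqrt M = M) by (apply sqrt_sqrt; lra).
    assert (Hsp : 0 < sqrt M) by (apply sqrt_lt_R0; lra).
    assert (Hcc : c * c * M = 1) by (unfold c; rewrite <- Hsq at 3; field; lra).
    assert (Hv' : normsq_le (fun x => Cmult (c,0) (v x)) 1).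
    { intros l Hl. rewrite fsum_scale. rewrite <- Hcc. specialize (Hv l Hl).
      assert (0 <= c*c) by nra. nra. }
    pose proof (Hu _ Hv') as H.
    assert (Hvl : in_l2 v) by (exists M; auto).
    intros l Hl. specialize (H l Hl).
    rewrite (fsum_ext _ (fun y => Cmult (c,0) (T v y))) in H.
    2:{ intros y _. rewrite T_scal; auto. }
    rewrite fsum_scale in H.
    pose proof (fsum_nonneg (T v) l).
    assert (HcM : c * c = / M) by (apply Rmult_eq_reg_r with M; [rewrite Hcc; field|]; lra).
    rewrite HcM in H.
    apply Rmult_le_compat_l with (r := M) in H; [|lra].
    replace (M * (/ M * fsum_sq (T v) l)) with (fsum_sq (T v) l) in H by (field; lra). lra.
  - subst M. intros l Hl. rewrite fsum_zero; [lra|].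
    intros y. rewrite (T0' T v Hlin (normsq_zero v Hv)). unfold Cnorm2, C0; simpl; ring.
Qed.


Lemma lin_minus {X Y} (T S : Op X Y) : linear_op T -> linear_op S -> linear_op (op_minus T S).
Proof.
  intros HT HS a u v Hu Hv y. unfold op_minus. rewrite HT, HS by auto.
  destruct a, (T u y), (T v y), (S u y), (S v y); ceq.
Qed.

Lemma part1 {X Y} (d : (X + Y) -> (X + Y) -> R) (hdnn : forall p q, 0 <= d p q)
  (T : Op X Y) : compact_op T -> in_Md d T.
Proof.
  intros Hc. pose proof Hc as [[Hlin [K [HK Hop]]] _].
  split; [split; [auto| exists K; auto]|].
  intros eps Heps.
  destruct (tailA T Hc (eps*eps/2)) as [G HG]; [nra|].
  set (dl := eps*eps / (2 * (INR (length G) + 1))).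
  assert (Hlen : 0 <= INR (length G)) by apply pos_INR.
  assert (Hdl : 0 < dl) by (unfold dl; apply Rdiv_lt_0_compat; nra).
  assert (Hdl2 : INR (length G) * dl <= eps*eps/2).
  { assert (dl * (2 * (INR (length G) + 1)) = eps*eps) by (unfold dl; field; lra). nra. }
  assert (Hb : forall y, exists F : list X, forall u, normsq_le u 1 -> (forall x, In x F -> u x = C0) ->
    Cnorm2 (T u y) <= dl).
  { intros y. apply tailB; auto. split; [auto| exists K; auto]. }
  set (Fy := fun y => proj1_sig (constructive_indefinite_description _ (Hb y))).
  assert (HFy : forall y u, normsq_le u 1 -> (forall x, In x (Fy y) -> u x = C0) -> Cnorm2 (T u y) <= dl).
  { intros y. exact (proj2_sig (constructive_indefinite_description _ (Hb y))). }
  set (F := flat_map Fy G).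
  set (S := fun (v : X -> C) y => if excluded_middle_informative (In y G) then T (Pon F v) y else C0).
  assert (HSlin : linear_op S).
  { intros a u v Hu Hv y. unfold S. destruct excluded_middle_informative.
    - replace (Pon F (fun x => Cplus (Cmult a (u x)) (v x)))
        with (fun x => Cplus (Cmult a (Pon F u x)) (Pon F v x)).
      + apply Hlin; apply Pon_l2; auto.
      + apply functional_extensionality; intros x; unfold Pon.
        destruct excluded_middle_informative; auto. destruct a; ceq.
    - destruct a; ceq. }
  exists S. split; [|split].
  - split; auto. exists K; split; auto. intros v M Hv l Hl.
    eapply Rle_trans; [apply fsum_mono with (v := T (Pon F v))|].
    + intros y _. unfold S. destruct excluded_middle_informative; [lra|].
      pose proof (Cnorm2_nonneg (T (Pon F v) y)). unfold Cnorm2, C0 in *; simpl in *; lra.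
    + apply Hop; auto. eapply normsq_mono; [apply Pon_le|]; eauto.
  - exists (1 + ssum F (fun x => ssum G (fun y => d (inl x) (inr y)))).
    intros x y HL. unfold coef, S. destruct excluded_middle_informative as [HyG|]; auto.
    destruct (excluded_middle_informative (In x F)) as [HxF|HxF].
    + exfalso.
      assert (H1 : d (inl x) (inr y) <= ssum G (fun y => d (inl x) (inr y))) by (apply (ssum_ge G (fun y => d (inl x) (inr y)) y); auto).
      assert (H2 : ssum G (fun y => d (inl x) (inr y)) <= ssum F (fun x => ssum G (fun y => d (inl x) (inr y)))).
      { apply (ssum_ge F (fun x => ssum G (fun y => d (inl x) (inr y)))); auto.
        intros; apply ssum_nonneg; auto. }
      lra.
    + apply T0'; auto. intros x'. unfold Pon, delta.
      destruct excluded_middle_informative; auto.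
      destruct excluded_middle_informative; auto. subst; contradiction.
  - apply opnorm_from_unit; [apply lin_minus; auto|].
    intros v Hv l Hl.
    rewrite (fsum_add _ (Poff G (T v)) (Pon G (T (Poff F v)))).
    2:{ intros y. unfold op_minus. rewrite (split_PQ T F v Hlin) by (exists 1; auto).
        set (p := T (Pon F v) y). set (q := T (Poff F v) y).
        unfold S, Poff at 1, Pon at 2. fold p. fold q.
        destruct excluded_middle_informative.
        - destruct p, q; unfold Cnorm2, Cminus, Cplus, C0; simpl; ring.
        - rewrite (split_PQ T F v Hlin) by (exists 1; auto). fold p. fold q. destruct p, q; unfold Cnorm2, Cminus, Cplus, C0; simpl; ring. }
    assert (H1 : fsum_sq (Poff G (T v)) l <= eps*eps/2) by (apply HG; auto).
    assert (H2 : fsum_sq (Pon G (T (Poff F v))) l <= INR (length G) * dl).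
    { eapply Rle_trans; [apply (fsum_support _ G); auto|].
      - intros y Hy. unfold Pon. destruct excluded_middle_informative; [tauto|].
        unfold Cnorm2, C0; simpl; ring.
      - apply fsum_bound. intros y Hy. unfold Pon.
        destruct excluded_middle_informative; [|tauto].
        apply HFy.
        + eapply normsq_mono; [apply Poff_le|]; eauto.
        + intros x Hx. unfold Poff. destruct excluded_middle_informative; auto.
          exfalso. apply n. unfold F. apply in_flat_map. exists y; auto. }
    lra.
Qed.


Lemma delta_norm {X} (x : X) : normsq_le (delta x) 1.
Proof.
  intros l Hl. eapply Rle_trans; [apply (fsum_support _ (x::nil)); auto|].
  - intros x' Hx'. unfold delta. destruct excluded_middle_informative.
    + subst; exfalso; apply Hx'; left; auto.
    + unfold Cnorm2, C0; simpl; ring.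
  - simpl. unfold delta. destruct excluded_middle_informative; [|tauto].
    unfold Cnorm2, C1; simpl; lra.
Qed.

Lemma part2 {X Y} (d : (X + Y) -> (X + Y) -> R)
  (H : forall T : Op X Y, compact_op T <-> in_Md d T) :
  forall f : X -> Y, injective f ->
    exists l : list X, forall x, d (inl x) (inr (f x)) <= 1 -> In x l.
Proof.
  intros f Hf. apply NNPP; intro Hn.
  set (A := fun x => d (inl x) (inr (f x)) <= 1).
  assert (Hinf : forall l, exists x, A x /\ ~ In x l).
  { intros l. apply NNPP; intro H1. apply Hn. exists l. intros x Hx.
    apply NNPP; intro H2. apply H1. exists x; auto. }
  set (g := fun y => match excluded_middle_informative (exists x, A x /\ f x = y) with
                     | left e => Some (proj1_sig (constructive_indefinite_description _ e))
                     | right _ => None end).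
  assert (Hg1 : forall y x, g y = Some x -> A x /\ f x = y).
  { intros y x. unfold g. destruct excluded_middle_informative as [e|]; [|discriminate].
    intros Hs. injection Hs; intros <-. exact (proj2_sig (constructive_indefinite_description _ e)). }
  assert (Hg2 : forall x, A x -> g (f x) = Some x).
  { intros x Hx. unfold g. destruct excluded_middle_informative as [e|ne].
    - f_equal. destruct (proj2_sig (constructive_indefinite_description _ e)) as [_ E].
      apply Hf; auto.
    - exfalso; apply ne; exists x; auto. }
  set (V := fun (v : X -> C) y => match g y with Some x => v x | None => C0 end).
  assert (HVlin : linear_op V).
  { intros a u v _ _ y. unfold V. destruct (g y); auto. destruct a; ceq. }
  assert (HVb : opnorm_le V 1).
  { intros v M Hv l Hl.
    set (pm := fun l => flat_map (fun y => match g y with Some x => x::nil | None => nil end) l).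
    assert (Hpm : forall l, fsum_sq (V v) l = fsum_sq v (pm l)).
    { induction l0; simpl; auto. rewrite IHl0. unfold V. destruct (g a); simpl; auto.
      unfold Cnorm2, C0; simpl; ring. }
    assert (Hin : forall l x, In x (pm l) -> exists y, In y l /\ g y = Some x).
    { intros l0 x Hx. apply in_flat_map in Hx. destruct Hx as [y [Hy Hx]].
      exists y; split; auto. destruct (g y); simpl in Hx; [|tauto]. destruct Hx as [->|[]]; auto. }
    assert (Hnd : forall l, NoDup l -> NoDup (pm l)).
    { induction 1 as [|y l0 Hy Hnd IH]; simpl; [constructor|].
      destruct (g y) eqn:E; simpl; auto. constructor; auto.
      intros Hx. destruct (Hin l0 x Hx) as [y' [Hy' E']].
      apply Hg1 in E, E'. destruct E as [_ E], E' as [_ E']. subst. contradiction. }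
    rewrite Hpm. replace (1*1*M) with M by ring. apply Hv. apply Hnd; auto. }
  assert (HVc : compact_op V).
  { apply H. split; [split; [auto| exists 1; split; [lra|auto]]|].
    intros eps Heps. exists V. split; [split; [auto| exists 1; split; [lra|auto]]|]. split.
    - exists 2. intros x y H2. unfold coef, V. destruct (g y) as [x'|] eqn:E; auto.
      apply Hg1 in E. destruct E as [HA <-]. unfold delta.
      destruct excluded_middle_informative; auto. subst. unfold A in HA. lra.
    - intros v M Hv l Hl. pose proof (normsq_le_M v M Hv).
      rewrite fsum_zero. nra. intros y. unfold op_minus. destruct (V v y); unfold Cnorm2, Cminus; simpl; ring. }
  set (pick := fun l => proj1_sig (constructive_indefinite_description _ (Hinf l))).
  assert (Hpick : forall l, A (pick l) /\ ~ In (pick l) l).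
  { intros l. exact (proj2_sig (constructive_indefinite_description _ (Hinf l))). }
  set (pre := fun n => nat_rect (fun _ => list X) nil (fun _ l => pick l :: l) n).
  set (xs := fun n => pick (pre n)).
  assert (Hpre : forall m n, (m < n)%nat -> In (xs m) (pre n)).
  { intros m n Hmn. induction Hmn; simpl; [left; auto|right; auto]. }
  assert (Hdist : forall m n, (m < n)%nat -> xs m <> xs n).
  { intros m n Hmn E. apply (proj2 (Hpick (pre n))). fold (xs n). rewrite <- E. apply Hpre; auto. }
  destruct HVc as [_ Hc].
  destruct (Hc (fun n => delta (xs n)) 1 (fun n => delta_norm _)) as [phi [Hphi [w [_ Hconv]]]].
  destruct (Hconv (1/4)) as [N HN]; [lra|].
  set (x1 := xs (phi N)). set (x2 := xs (phi (S N))).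
  assert (Hx12 : x1 <> x2) by (apply Hdist; apply Hphi).
  assert (HA1 : A x1) by apply Hpick. assert (HA2 : A x2) by apply Hpick.
  set (a := V (delta x1)). set (b := V (delta x2)).
  set (l := f x1 :: f x2 :: nil).
  assert (Hl : NoDup l).
  { constructor; [|constructor; [simpl; auto|constructor]].
    simpl. intros [E|[]]. apply Hx12. apply Hf; auto. }
  assert (Ha : fsum_sq (fun y => Cminus (a y) (w y)) l <= 1/4) by (apply (HN N); auto).
  assert (Hb : fsum_sq (fun y => Cminus (b y) (w y)) l <= 1/4) by (apply (HN (S N)); auto).
  assert (Hab : fsum_sq (fun y => Cminus (a y) (b y)) l <= 2*(1/4) + 2*(1/4)).
  { eapply Rle_trans; [apply fsum_lin3 with (v := fun y => Cminus (a y) (w y)) (w := fun y => Cminus (b y) (w y)); intros; apply Cnorm2_tri2|]. lra. }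
  assert (Ha1 : a (f x1) = C1).
  { unfold a, V. rewrite Hg2 by auto. unfold delta. destruct excluded_middle_informative; tauto. }
  assert (Ha2 : a (f x2) = C0).
  { unfold a, V. rewrite Hg2 by auto. unfold delta. destruct excluded_middle_informative; auto. congruence. }
  assert (Hb1 : b (f x1) = C0).
  { unfold b, V. rewrite Hg2 by auto. unfold delta. destruct excluded_middle_informative; auto. congruence. }
  assert (Hb2 : b (f x2) = C1).
  { unfold b, V. rewrite Hg2 by auto. unfold delta. destruct excluded_middle_informative; tauto. }
  unfold l in Hab. simpl in Hab. rewrite Ha1, Ha2, Hb1, Hb2 in Hab.
  unfold Cnorm2, Cminus, C0, C1 in Hab; simpl in Hab. lra.
Qed.


Theorem mainTheorem2 (X Y : Type) (dX : X -> X -> R) (dY : Y -> Y -> R)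
  (hX : is_metric dX) (hXc : countable X) (hXd : discrete_metric dX)
  (hY : is_metric dY) (hYc : countable Y) (hYd : discrete_metric dY)
  (d : (X + Y) -> (X + Y) -> R) (hd : in_D dX dY d) :
  (forall T : Op X Y, compact_op T -> in_Md d T) /\
  ((forall T : Op X Y, compact_op T <-> in_Md d T) ->
   exists L, 0 < L /\
     forall f : X -> Y, injective f ->
       exists l : list X, forall x, d (inl x) (inr (f x)) <= L -> In x l).
Proof.
  destruct hd as [[Hnn _] _]. split.
  - intros T HT. apply part1; auto.
  - intros H. exists 1. split; [lra|]. apply part2; auto.
Qed.
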